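(* Let $E=\{x_1,\dots,x_n\}\subset\mathbb{R}^2$ with $x_i\,\mathcal{I}\,x_j$ for all $i\neq j$. The Max-Sum-Neighbor $p$-dispersion problem in $E$ is solvable in polynomial time. For $p=2$ and $p=3$ it is solvable in $O(n)$ time using $O(1)$ additional memory space. For $p>3$ there is an algorithm (a dynamic programming algorithm) that solves it to optimality, returning both the optimal value and an optimal selection of $p$ points, in $O(pn^2)$ time and $O(pn)$ memory space.
   Context: For $y=(y^1,y^2),z=(z^1,z^2)\in\mathbb{R}^2$ write $y\prec z$ iff $y^1<z^1$ and $y^2>z^2$, and $y\,\mathcal{I}\,z$ iff $y\prec z$ or $z\prec y$ (so $E$ is a two-dimensional Pareto front). Fix $\alpha>0$, let $d$ be the Euclidean distance on $\mathbb{R}^2$. Since the first coordinates of points of $E$ are pairwise distinct, index $E$ so that $x_1^1<x_2^1<\dots<x_n^1$ (then $x_1\prec x_2\prec\dots\prec x_n$), and set $d_{ij}=d(x_i,x_j)^\alpha$. For an integer $2\le p\le n$, the Max-Sum-Neighbor $p$-dispersion problem is $\max_{1\le i_1<i_2<\dots<i_p\le n}\sum_{j=1}^{p-1}d_{i_j,i_{j+1}}$, i.e. select $p$ points of $E$ maximizing the sum of the dissimilarities between consecutive selected points. Complexities are in a model where arithmetic operations, comparisons and evaluation of $d(\cdot,\cdot)^\alpha$ take $O(1)$ time; ''additional memory space'' excludes the storage of the input. *)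

(* Defs.v *)
From Stdlib Require Import Reals List Sorted Lia Lra.
Import ListNotations.
Open Scope R_scope.

Definition point := (R * R)%type.

Definition prec (y z : point) : Prop := fst y < fst z /\ snd y > snd z.

Definition dist (y z : point) : R :=
  sqrt ((fst y - fst z) ^ 2 + (snd y - snd z) ^ 2).

(** The point set E, given as the list [x_1; ...; x_n] (0-based here). *)
Definition pt (E : list point) (i : nat) : point := nth i E (0, 0).

Definition dd (E : list point) (alpha : R) (i j : nat) : R :=
  Rpower (dist (pt E i) (pt E j)) alpha.

(** E is a two-dimensional Pareto front indexed in increasing first
    coordinate: x_0 ≺ x_1 ≺ ... ≺ x_{n-1}. *)
Definition pareto_sorted (E : list point) : Prop :=
  forall i j, (i < j)%nat -> (j < length E)%nat -> prec (pt E i) (pt E j).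

Fixpoint obj (E : list point) (alpha : R) (s : list nat) : R :=
  match s with
  | i :: ((j :: _) as t) => dd E alpha i j + obj E alpha t
  | _ => 0
  end.

Definition feasible (E : list point) (p : nat) (s : list nat) : Prop :=
  length s = p /\ StronglySorted lt s /\ Forall (fun i => (i < length E)%nat) s.

Definition optimal_selection (E : list point) (alpha : R) (p : nat)
  (s : list nat) : Prop :=
  feasible E p s /\
  forall t, feasible E p t -> obj E alpha t <= obj E alpha s.

(** * Machine model: a unit-cost real RAM with indirect addressing.
    Each instruction costs one time step; arithmetic, comparisons and
    evaluation of d(.,.)^alpha are single instructions.  The input E is
    read-only and accessed through the oracle instructions [RDist] /
    [RCoord1] / [RCoord2]; it is not part of the memory. *)

Inductive instr : Type :=
  | NConst (r : nat) (k : nat)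
  | NAdd (r a b : nat)
  | NSub (r a b : nat)                    (* N[r] := N[a] - N[b] (truncated) *)
  | NLoad (r a : nat)
  | NStore (a b : nat)
  | RConst (r : nat) (z : Z)
  | RAdd (r a b : nat)
  | RSub (r a b : nat)
  | RMul (r a b : nat)
  | RLoad (r a : nat)
  | RStore (a b : nat)
  | RDist (r a b : nat)
  | RCoord1 (r a : nat)
  | RCoord2 (r a : nat)
  | JNLt (a b l : nat)
  | JRLt (a b l : nat)
  | Jmp (l : nat)
  | Out (a : nat)
  | Halt.

Definition program := list instr.

Record state : Type := mkState {
  pc : nat;
  nreg : nat -> nat;
  rreg : nat -> R;
  out : list nat
}.

Definition updN (f : nat -> nat) (r v : nat) : nat -> nat :=
  fun x => if Nat.eqb x r then v else f x.
Definition updR (f : nat -> R) (r : nat) (v : R) : nat -> R :=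
  fun x => if Nat.eqb x r then v else f x.

Definition init (n p : nat) : state :=
  mkState 0 (updN (updN (fun _ => 0%nat) 0 n) 1 p) (fun _ => 0) [].

Definition halted (P : program) (s : state) : Prop :=
  nth_error P (pc s) = None \/ nth_error P (pc s) = Some Halt.

Definition accessed (i : instr) (s : state) : list nat :=
  let N := nreg s in
  match i with
  | NConst r _ => [r]
  | NAdd r a b | NSub r a b => [r; a; b]
  | NLoad r a => [r; a; N a]
  | NStore a b => [a; b; N a]
  | RConst r _ => [r]
  | RAdd r a b | RSub r a b | RMul r a b => [r; a; b]
  | RLoad r a => [r; a; N a]
  | RStore a b => [a; b; N a]
  | RDist r a b => [r; a; b]
  | RCoord1 r a | RCoord2 r a => [r; a]
  | JNLt a b _ | JRLt a b _ => [a; b]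
  | Jmp _ => []
  | Out a => [a]
  | Halt => []
  end.

Definition exec_instr (E : list point) (alpha : R) (i : instr) (s : state)
  : state :=
  let N := nreg s in
  let Rg := rreg s in
  let nx := S (pc s) in
  match i with
  | NConst r k => mkState nx (updN N r k) Rg (out s)
  | NAdd r a b => mkState nx (updN N r (N a + N b)) Rg (out s)
  | NSub r a b => mkState nx (updN N r (N a - N b)) Rg (out s)
  | NLoad r a => mkState nx (updN N r (N (N a))) Rg (out s)
  | NStore a b => mkState nx (updN N (N a) (N b)) Rg (out s)
  | RConst r z => mkState nx N (updR Rg r (IZR z)) (out s)
  | RAdd r a b => mkState nx N (updR Rg r (Rg a + Rg b)) (out s)
  | RSub r a b => mkState nx N (updR Rg r (Rg a - Rg b)) (out s)
  | RMul r a b => mkState nx N (updR Rg r (Rg a * Rg b)) (out s)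
  | RLoad r a => mkState nx N (updR Rg r (Rg (N a))) (out s)
  | RStore a b => mkState nx N (updR Rg (N a) (Rg b)) (out s)
  | RDist r a b => mkState nx N (updR Rg r (dd E alpha (N a) (N b))) (out s)
  | RCoord1 r a => mkState nx N (updR Rg r (fst (pt E (N a)))) (out s)
  | RCoord2 r a => mkState nx N (updR Rg r (snd (pt E (N a)))) (out s)
  | JNLt a b l =>
      mkState (if Nat.ltb (N a) (N b) then l else nx) N Rg (out s)
  | JRLt a b l =>
      mkState (if Rlt_dec (Rg a) (Rg b) then l else nx) N Rg (out s)
  | Jmp l => mkState l N Rg (out s)
  | Out a => mkState nx N Rg (out s ++ [N a])
  | Halt => s
  end.

(** [exec E alpha P k M s f]: starting from [s], the program [P] halts in
    state [f] after exactly [k] steps, and every register address accessed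
    during the run is < [M] (so at most [M] memory cells are used). *)
Inductive exec (E : list point) (alpha : R) (P : program)
  : nat -> nat -> state -> state -> Prop :=
  | exec_halt M s : halted P s -> exec E alpha P 0 M s s
  | exec_step M k s i f :
      nth_error P (pc s) = Some i -> i <> Halt ->
      Forall (fun a => (a < M)%nat) (accessed i s) ->
      exec E alpha P k M (exec_instr E alpha i s) f ->
      exec E alpha P (S k) M s f.

Definition solves_within (E : list point) (alpha : R) (P : program)
  (p T M : nat) : Prop :=
  exists k f,
    exec E alpha P k M (init (length E) p) f /\ (k <= T)%nat /\
    optimal_selection E alpha p (out f) /\
    rreg f 0 = obj E alpha (out f).

(* Main.v *)
Require Import Defs.
From Stdlib Require Import Reals List Sorted Lia Lra.
Import ListNotations.
Open Scope R_scope.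

Lemma dist_mono (E : list point) i k j :
  pareto_sorted E -> (i <= k)%nat -> (k < j)%nat -> (j < length E)%nat ->
  0 < Defs.dist (pt E k) (pt E j) <= Defs.dist (pt E i) (pt E j).
Proof.
  intros HP Hik Hkj Hj.
  destruct (HP k j Hkj Hj) as [A1 A2].
  assert (B : fst (pt E i) <= fst (pt E k) /\ snd (pt E i) >= snd (pt E k)).
  { destruct (Nat.eq_dec i k) as [->|Hne]. lra.
    destruct (HP i k ltac:(lia) ltac:(lia)). lra. }
  unfold Defs.dist; split.
  - apply sqrt_lt_R0. simpl. nra.
  - apply sqrt_le_1_alt. simpl. nra.
Qed.

Lemma dist_mono2 (E : list point) i k j :
  pareto_sorted E -> (i < k)%nat -> (k <= j)%nat -> (j < length E)%nat ->
  0 < Defs.dist (pt E i) (pt E k) <= Defs.dist (pt E i) (pt E j).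
Proof.
  intros HP Hik Hkj Hj.
  destruct (HP i k Hik ltac:(lia)) as [A1 A2].
  assert (B : fst (pt E k) <= fst (pt E j) /\ snd (pt E k) >= snd (pt E j)).
  { destruct (Nat.eq_dec k j) as [->|Hne]. lra.
    destruct (HP k j ltac:(lia) ltac:(lia)). lra. }
  unfold Defs.dist; split.
  - apply sqrt_lt_R0. simpl. nra.
  - apply sqrt_le_1_alt. simpl. nra.
Qed.

Lemma dd_mono1 E alpha i k j : 0 < alpha ->
  pareto_sorted E -> (i <= k)%nat -> (k < j)%nat -> (j < length E)%nat ->
  dd E alpha k j <= dd E alpha i j.
Proof.
  intros Ha HP ? ? ?. unfold dd. apply Rle_Rpower_l. lra.
  apply dist_mono; auto.
Qed.

Lemma dd_mono2 E alpha i k j : 0 < alpha ->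
  pareto_sorted E -> (i < k)%nat -> (k <= j)%nat -> (j < length E)%nat ->
  dd E alpha i k <= dd E alpha i j.
Proof.
  intros Ha HP ? ? ?. unfold dd. apply Rle_Rpower_l. lra.
  apply dist_mono2; auto.
Qed.

Inductive steps (E : list point) (alpha : R) (P : program) (M : nat)
  : nat -> state -> state -> Prop :=
| st0 s : steps E alpha P M 0 s s
| stS k s i f : nth_error P (pc s) = Some i -> i <> Halt ->
    Forall (fun a => (a < M)%nat) (accessed i s) ->
    steps E alpha P M k (exec_instr E alpha i s) f ->
    steps E alpha P M (S k) s f.

Lemma steps_trans E alpha P M k1 k2 s s1 s2 :
  steps E alpha P M k1 s s1 -> steps E alpha P M k2 s1 s2 ->
  steps E alpha P M (k1 + k2) s s2.
Proof. induction 1; intros; simpl; auto. econstructor; eauto. Qed.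

Lemma steps_exec E alpha P M k s f :
  steps E alpha P M k s f -> halted P f -> exec E alpha P k M s f.
Proof. induction 1; intros. constructor; auto. econstructor; eauto. Qed.

Ltac acc0 := repeat constructor; cbn [accessed nreg updN]; unfold updN; cbn; lia.
Ltac step0 := eapply stS; [reflexivity | discriminate | acc0 | cbn [exec_instr pc nreg rreg out]].

Definition P2 : program :=
  [NConst 2 1; NSub 3 0 2; RDist 0 4 3; Out 4; Out 3; Halt].

Lemma p2_ok E alpha : 0 < alpha -> pareto_sorted E -> (2 <= length E)%nat ->
  solves_within E alpha P2 2 (6 * length E + 6) 6.
Proof.
  intros Ha HP Hn. set (n := length E) in *.
  assert (Hs : exists f, steps E alpha P2 6 5 (init n 2) f /\ halted P2 f /\
     out f = [0%nat; (n-1)%nat] /\ rreg f 0 = dd E alpha 0 (n-1)).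
  { eexists. split. unfold init.
    step0. step0. step0. step0. step0. apply st0.
    split. right; reflexivity. unfold updN, updR; cbn. split; reflexivity. }
  destruct Hs as (f & Hst & Hh & Ho & Hr).
  exists 5%nat, f. split. apply steps_exec; auto. split. lia.
  rewrite Ho. split.
  - split. split. reflexivity. split.
    repeat constructor; lia. repeat constructor; lia.
    intros t (Hl & Hsrt & Hall). destruct t as [|a [|b [|c t]]]; try discriminate.
    inversion Hsrt as [|? ? Hs1 Hf1]; subst. inversion Hf1 as [|? ? Hab _]; subst.
    rewrite Forall_forall in Hall. assert (b < n)%nat by (apply Hall; simpl; auto).
    simpl obj. apply Rplus_le_compat_r.
    eapply Rle_trans. apply dd_mono1 with (i := 0%nat); auto; lia.
    apply dd_mono2; auto; lia.
  - rewrite Hr. simpl. ring.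
Qed.

Definition P3 : program :=
  [NConst 2 1; NSub 3 0 2; NConst 5 1; RDist 1 4 5; RDist 2 5 3; RAdd 0 1 2;
   NConst 6 1; NAdd 5 5 2;
   (*8*) JNLt 5 3 10; Jmp 19;
   (*10*) RDist 1 4 5; RDist 2 5 3; RAdd 1 1 2; JRLt 0 1 15; Jmp 17;
   (*15*) RAdd 0 1 7; NAdd 6 5 4;
   (*17*) NAdd 5 5 2; Jmp 8;
   (*19*) Out 4; Out 6; Out 3; Halt].

Definition inv3 E alpha n (s : state) k a :=
  nreg s 0 = n /\ nreg s 2 = 1%nat /\ nreg s 3 = (n-1)%nat /\ nreg s 4 = 0%nat /\
  nreg s 5 = k /\ nreg s 6 = a /\ rreg s 7 = 0 /\ out s = [] /\
  rreg s 0 = dd E alpha 0 a + dd E alpha a (n-1) /\ (1 <= a < k)%nat /\ (k <= n-1)%nat /\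
  (forall b, (1 <= b < k)%nat -> dd E alpha 0 b + dd E alpha b (n-1) <= rreg s 0).

Lemma loop3 E alpha n m : forall s k a, (n - 1 - k)%nat = m -> pc s = 8%nat ->
  inv3 E alpha n s k a ->
  exists t f a', steps E alpha P3 20 t s f /\ (t <= 9 * m + 2)%nat /\ pc f = 19%nat /\
     inv3 E alpha n f (n-1) a'.
Proof.
  induction m as [|m IH]; intros [pc0 nr rr o] k a Hm Hpc Hinv; simpl in Hpc; subst pc0;
  destruct Hinv as (H0 & H2 & H3 & H4 & H5 & H6 & H7 & Ho & Hr0 & Ha & Hk & Hb);
  cbn [nreg rreg out] in *.
  - do 2 eexists; exists a. split.
    step0. rewrite H5, H3. destruct (Nat.ltb_spec k (n-1)); [lia|].
    step0. apply st0.
    split. lia. split. reflexivity.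
    replace k with (n-1)%nat in * by lia.
    unfold inv3; cbn [nreg rreg out]; repeat split; auto; lia.
  - assert (Hit : exists t1 s' a1, steps E alpha P3 20 t1 (mkState 8 nr rr o) s' /\
      (t1 <= 9)%nat /\ pc s' = 8%nat /\ inv3 E alpha n s' (S k) a1).
    { assert (Hkn : (k < n - 1)%nat) by lia.
      destruct (Rlt_dec (rr 0%nat) (dd E alpha 0 k + dd E alpha k (n-1))) as [Hlt|Hge].
      - do 2 eexists; exists k. split.
        step0. rewrite H5, H3. destruct (Nat.ltb_spec k (n-1)); [|lia].
        step0. step0. step0. step0. unfold updN, updR; cbn [Nat.eqb]. rewrite ?H4, ?H5, ?H3.
destruct (Rlt_dec _ _) as [_|Hn]; [|contradiction].
        step0. step0. step0. step0. apply st0.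
        split. lia. split. reflexivity.
        unfold inv3, updN, updR; cbn [Nat.eqb nreg rreg out].
        rewrite ?H0, ?H2, ?H3, ?H4, ?H5, ?H7, ?Rplus_0_r, ?Nat.add_0_r; repeat split; try lia; auto.
        intros b Hb'. destruct (Nat.eq_dec b k) as [->|Hne]. lra.
        specialize (Hb b ltac:(lia)). lra.
      - do 2 eexists; exists a. split.
        step0. rewrite H5, H3. destruct (Nat.ltb_spec k (n-1)); [|lia].
        step0. step0. step0. step0. unfold updN, updR; cbn [Nat.eqb]. rewrite ?H4, ?H5, ?H3.
        destruct (Rlt_dec _ _) as [Hn|_]; [contradiction|].
        step0. step0. step0. apply st0.
        split. lia. split. reflexivity.
        unfold inv3, updN, updR; cbn [Nat.eqb nreg rreg out].
        rewrite ?H0, ?H2, ?H3, ?H4, ?H5, ?H6, ?H7, ?Rplus_0_r, ?Nat.add_0_r; repeat split; try lia; auto.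
        intros b Hb'. destruct (Nat.eq_dec b k) as [->|Hne]. lra.
        specialize (Hb b ltac:(lia)). lra. }
    destruct Hit as (t1 & s' & a1 & Hs1 & Ht1 & Hpc1 & Hi1).
    destruct (IH s' (S k) a1 ltac:(lia) Hpc1 Hi1) as (t2 & f & a' & Hs2 & Ht2 & Hpc2 & Hi2).
    exists (t1+t2)%nat, f, a'. split. eapply steps_trans; eauto. split. lia. auto.
Qed.

Lemma p3_ok E alpha : 0 < alpha -> pareto_sorted E -> (3 <= length E)%nat ->
  solves_within E alpha P3 3 (20 * length E + 20) 20.
Proof.
  intros Hal HP Hn. set (n := length E) in *.
  assert (Hi : exists s, steps E alpha P3 20 8 (init n 3) s /\ pc s = 8%nat /\ inv3 E alpha n s 2 1).
  { eexists. split. unfold init.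
    do 8 step0. apply st0. split. reflexivity.
    unfold inv3, updN, updR; cbn [Nat.eqb nreg rreg out].
    repeat split; try lia; auto.
    intros b Hb. replace b with 1%nat by lia. lra. }
  destruct Hi as (s & Hs1 & Hpc1 & Hi1).
  destruct (loop3 E alpha n (n-1-2) s 2 1 eq_refl Hpc1 Hi1) as (t & f & a & Hs2 & Ht & Hpc2 & Hi2).
  destruct f as [pcf nr rr o]. cbn in Hpc2. subst pcf.
  destruct Hi2 as (H0 & H2 & H3 & H4 & H5 & H6 & H7 & Ho & Hr0 & Ha & Hk & Hb).
  cbn [nreg rreg out] in *.
  assert (Hfin : exists g, steps E alpha P3 20 3 (mkState 19 nr rr o) g /\ halted P3 g /\
    out g = [0%nat; a; (n-1)%nat] /\ rreg g 0 = rr 0%nat).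
  { eexists. split. step0. step0. step0. apply st0. split. right; reflexivity.
    cbn. rewrite Ho, H4, H6, H3. split; reflexivity. }
  destruct Hfin as (g & Hs3 & Hh & Hog & Hrg).
  exists (8 + (t + 3))%nat, g. split.
  apply steps_exec; auto. eapply steps_trans. eauto. eapply steps_trans; eauto.
  split. lia. rewrite Hog. split.
  - split. split. reflexivity. split.
    repeat constructor; lia. repeat constructor; lia.
    intros t' (Hl & Hsrt & Hall). destruct t' as [|x [|y [|z [|w t']]]]; try discriminate.
    inversion Hsrt as [|? ? Hs1' Hf1]; subst. inversion Hf1 as [|? ? Hxy Hf2]; subst.
    inversion Hf2 as [|? ? Hxz _]; subst.
    inversion Hs1' as [|? ? _ Hf3]; subst. inversion Hf3 as [|? ? Hyz _]; subst.
    rewrite Forall_forall in Hall. assert (z < n)%nat by (apply Hall; simpl; auto).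
    simpl obj. rewrite !Rplus_0_r, <- Hr0.
    specialize (Hb y ltac:(lia)).
    assert (dd E alpha x y <= dd E alpha 0 y) by (apply dd_mono1; auto; lia).
    assert (dd E alpha y z <= dd E alpha y (n-1)) by (apply dd_mono2; auto; lia).
    lra.
  - rewrite Hrg, Hr0. simpl. ring.
Qed.

Definition B := 16%nat.
Definition ra (n k i : nat) : nat := (B + k*n + i)%nat.

Fixpoint path (nx : nat -> nat) (n k i : nat) : list nat :=
  match k with
  | 0 => []
  | S k' => i :: match k' with 0 => [] | S _ => path nx n k' (nx (ra n k i)) end
  end.

Definition feas_from (n k i : nat) (t : list nat) : Prop :=
  (exists r, t = i :: r) /\ length t = k /\ StronglySorted lt t /\
  Forall (fun a => (a < n)%nat) t.

Definition opt_from E alpha n k i v q : Prop :=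
  feas_from n k i q /\ obj E alpha q = v /\
  forall t, feas_from n k i t -> obj E alpha t <= v.

Definition Tab E alpha n (nr : nat -> nat) (rr : nat -> R) K : Prop :=
  forall k i, (1 <= k < K)%nat -> (i + k <= n)%nat ->
    opt_from E alpha n k i (rr (ra n k i)) (path nr n k i).

Definition RowP E alpha n (nr : nat -> nat) (rr : nat -> R) K i : Prop :=
  forall i', (i' < i)%nat ->
    opt_from E alpha n K i' (rr (ra n K i')) (path nr n K i').

Lemma sorted_bound n : forall r i, StronglySorted lt (i :: r) ->
  Forall (fun a => (a < n)%nat) (i :: r) -> (i + length (i :: r) <= n)%nat.
Proof.
  induction r as [|j r IH]; intros i Hs Hf.
  - inversion Hf; subst. simpl; lia.
  - inversion Hs as [|? ? Hs' Hf']; subst. inversion Hf' as [|? ? Hij _]; subst.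
    inversion Hf as [|? ? _ Hf2]; subst.
    specialize (IH j Hs' Hf2). simpl in *. lia.
Qed.

Lemma feas_bound n k i t : feas_from n k i t -> (i + k <= n)%nat.
Proof.
  intros ((r & ->) & Hl & Hs & Hf). rewrite <- Hl. apply sorted_bound; auto.
Qed.

Lemma path_len nx n k i : length (path nx n k i) = k.
Proof.
  revert i; induction k as [|k IH]; intros i; simpl; auto.
  destruct k; simpl; auto. f_equal. apply IH.
Qed.

Lemma path_frame_small nr nr' n k i :
  (forall x, (B <= x)%nat -> nr' x = nr x) -> path nr' n k i = path nr n k i.
Proof.
  intros H. revert i; induction k as [|k IH]; intros i; simpl; auto.
  destruct k; auto. f_equal. rewrite H. apply IH. unfold ra; lia.
Qed.

Lemma path_frame_row nr nr' n k : forall i,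
  Forall (fun a => (a < n)%nat) (path nr n k i) ->
  (forall k' j, (2 <= k' <= k)%nat -> (j < n)%nat -> (k' = k -> j = i) ->
     nr' (ra n k' j) = nr (ra n k' j)) ->
  path nr' n k i = path nr n k i.
Proof.
  induction k as [|k IH]; intros i Hf H; simpl; auto.
  destruct k as [|k]; auto. simpl in Hf. inversion Hf as [|? ? Hi Hf']; subst.
  rewrite (H (S (S k)) i); try lia; auto.
  f_equal. apply IH; auto.
  intros k' j Hk' Hj _. apply H; lia.
Qed.

Lemma opt_row1 E alpha n i : (i < n)%nat -> opt_from E alpha n 1 i 0 [i].
Proof.
  intros Hi. split; [|split].
  - split. eauto. split. reflexivity. split. repeat constructor. repeat constructor; auto.
  - reflexivity.
  - intros t ((r & ->) & Hl & _). destruct r; [|discriminate]. simpl. lra.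
Qed.

Lemma opt_ext E alpha n K i a v q best (g : nat -> R) :
  (1 <= K)%nat -> (i < a)%nat ->
  opt_from E alpha n K a v q -> best = dd E alpha i a + v ->
  (forall j t, (i < j)%nat -> feas_from n K j t -> obj E alpha t <= g j) ->
  (forall j, (i < j)%nat -> (j + K <= n)%nat -> dd E alpha i j + g j <= best) ->
  opt_from E alpha n (S K) i best (i :: q).
Proof.
  intros HK Hia (((r & ->) & Hl & Hs & Hf) & Hobj & Hopt) Hb Hg Hbest.
  subst K. split; [|split].
  - split. eauto. split. simpl in *; lia. split.
    + constructor; auto. constructor. auto.
      inversion Hs as [|? ? _ Hf']; subst. eapply Forall_impl; [|exact Hf']. intros; simpl in *; lia.
    + constructor; auto. inversion Hf; lia.
  - change (obj E alpha (i :: a :: r)) with (dd E alpha i a + obj E alpha (a :: r)). lra.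
  - intros t ((r0 & ->) & Hl0 & Hs0 & Hf0).
    destruct r0 as [|j r1]. simpl in Hl0; lia.
    inversion Hs0 as [|? ? Hs1 Hf1]; subst. inversion Hf1 as [|? ? Hij _]; subst.
    inversion Hf0 as [|? ? _ Hf2]; subst.
    assert (Hft : feas_from n (length (a :: r)) j (j :: r1)).
    { split. eauto. split. simpl in *; lia. split; auto. }
    pose proof (feas_bound _ _ _ _ Hft).
    specialize (Hg j _ Hij Hft). specialize (Hbest j Hij H).
    change (obj E alpha (i :: j :: r1)) with (dd E alpha i j + obj E alpha (j :: r1)). lra.
Qed.

Lemma opt_final E alpha n p v q : 0 < alpha -> pareto_sorted E -> n = length E ->
  (2 <= p)%nat -> opt_from E alpha n p 0 v q -> optimal_selection E alpha p q /\ obj E alpha q = v.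
Proof.
  intros Ha HP Hn Hp (((r & ->) & Hl & Hs & Hf) & Hobj & Hopt).
  split; auto. split.
  - split; auto. split; auto. subst n; auto.
  - intros t (Hlt & Hst & Hft). rewrite Hobj.
    destruct t as [|x [|y r1]]; simpl in Hlt; try lia.
    inversion Hst as [|? ? Hs1 Hf1]; subst. inversion Hf1 as [|? ? Hxy Hf1']; subst.
    inversion Hft as [|? ? Hx Hft']; subst. inversion Hft' as [|? ? Hy _]; subst.
    apply Rle_trans with (obj E alpha (0%nat :: y :: r1)).
    + change (obj E alpha (x :: y :: r1)) with (dd E alpha x y + obj E alpha (y :: r1)).
      change (obj E alpha (0%nat :: y :: r1)) with (dd E alpha 0 y + obj E alpha (y :: r1)).
      pose proof (dd_mono1 E alpha 0 x y Ha HP ltac:(lia) Hxy Hy). lra.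
    + apply Hopt. split. eauto. split. simpl; auto. split.
      * constructor; auto. constructor. lia.
        inversion Hs1 as [|? ? _ Hf3]; subst. eapply Forall_impl; [|exact Hf3]. intros; simpl in *; lia.
      * constructor. lia. auto.
Qed.

Lemma updN_neq f r v x : x <> r -> updN f r v x = f x.
Proof. intros H. unfold updN. destruct (Nat.eqb_spec x r); congruence. Qed.
Lemma updN_eq f r v x : x = r -> updN f r v x = v.
Proof. intros H. unfold updN. destruct (Nat.eqb_spec x r); congruence. Qed.
Lemma updR_neq f r v x : x <> r -> updR f r v x = f x.
Proof. intros H. unfold updR. destruct (Nat.eqb_spec x r); congruence. Qed.
Lemma updR_eq f r v x : x = r -> updR f r v x = v.
Proof. intros H. unfold updR. destruct (Nat.eqb_spec x r); congruence. Qed.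

Lemma ra_lt n k K j : (k < K)%nat -> (j < n)%nat -> (ra n k j < ra n K 0)%nat.
Proof. unfold ra; intros; nia. Qed.

Lemma ra_ge n k j : (B <= ra n k j)%nat.
Proof. unfold ra; lia. Qed.

Lemma opt_feas_all E alpha n k i v q : opt_from E alpha n k i v q -> Forall (fun a => (a < n)%nat) q.
Proof. intros ((_ & _ & _ & H) & _). exact H. Qed.

Lemma Tab_small E alpha n nr nr' rr rr' K :
  (forall x, (B <= x)%nat -> nr' x = nr x) -> (forall x, (B <= x)%nat -> rr' x = rr x) ->
  Tab E alpha n nr rr K -> Tab E alpha n nr' rr' K.
Proof.
  intros Hn Hr T k i Hk Hi. rewrite Hr by apply ra_ge.
  rewrite (path_frame_small nr nr'); auto.
Qed.

Lemma RowP_small E alpha n nr nr' rr rr' K i :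
  (forall x, (B <= x)%nat -> nr' x = nr x) -> (forall x, (B <= x)%nat -> rr' x = rr x) ->
  RowP E alpha n nr rr K i -> RowP E alpha n nr' rr' K i.
Proof.
  intros Hn Hr T i' Hi. rewrite Hr by apply ra_ge.
  rewrite (path_frame_small nr nr'); auto.
Qed.

Lemma Tab_updN E alpha n nr rr K r v : (r < B)%nat ->
  Tab E alpha n nr rr K -> Tab E alpha n (updN nr r v) rr K.
Proof. intros Hr. apply Tab_small; auto. intros; apply updN_neq; lia. Qed.
Lemma Tab_updR E alpha n nr rr K r v : (r < B)%nat ->
  Tab E alpha n nr rr K -> Tab E alpha n nr (updR rr r v) K.
Proof. intros Hr. apply Tab_small; auto. intros; apply updR_neq; lia. Qed.
Lemma RowP_updN E alpha n nr rr K i r v : (r < B)%nat ->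
  RowP E alpha n nr rr K i -> RowP E alpha n (updN nr r v) rr K i.
Proof. intros Hr. apply RowP_small; auto. intros; apply updN_neq; lia. Qed.
Lemma RowP_updR E alpha n nr rr K i r v : (r < B)%nat ->
  RowP E alpha n nr rr K i -> RowP E alpha n nr (updR rr r v) K i.
Proof. intros Hr. apply RowP_small; auto. intros; apply updR_neq; lia. Qed.

Lemma Tab_2 E alpha n nr rr : (forall i, (i < n)%nat -> rr (ra n 1 i) = 0) -> Tab E alpha n nr rr 2.
Proof.
  intros H k i Hk Hi. replace k with 1%nat in * by lia. rewrite H by lia.
  simpl. apply opt_row1. lia.
Qed.

Lemma RowP_0 E alpha n nr rr K : RowP E alpha n nr rr K 0.
Proof. intros i' H; lia. Qed.

Lemma Tab_next E alpha n nr rr K i : (n < i + K)%nat ->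
  Tab E alpha n nr rr K -> RowP E alpha n nr rr K i -> Tab E alpha n nr rr (S K).
Proof.
  intros Hi T R k i0 Hk Hi0. destruct (Nat.eq_dec k K) as [->|Hne].
  apply R; lia. apply T; lia.
Qed.

Lemma store_ok E alpha n nr rr K i a best :
  (2 <= K)%nat -> (i + K <= n)%nat -> (i < a)%nat -> (a + (K-1) <= n)%nat ->
  Tab E alpha n nr rr K -> RowP E alpha n nr rr K i ->
  best = dd E alpha i a + rr (ra n (K-1) a) ->
  (forall j, (i < j)%nat -> (j + (K-1) <= n)%nat -> dd E alpha i j + rr (ra n (K-1) j) <= best) ->
  Tab E alpha n (updN nr (ra n K i) a) (updR rr (ra n K i) best) K /\
  RowP E alpha n (updN nr (ra n K i) a) (updR rr (ra n K i) best) K (S i).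
Proof.
  intros HK Hi Hia Ha T R Hb Hbest. split.
  - intros k i0 Hk Hi0. specialize (T k i0 Hk Hi0).
    assert (Hne : ra n k i0 <> ra n K i).
    { pose proof (ra_lt n k K i0 ltac:(lia) ltac:(lia)). unfold ra in *; lia. }
    rewrite updR_neq by exact Hne.
    rewrite (path_frame_row nr); auto. eapply opt_feas_all; eauto.
    intros k' j Hk' Hj _. apply updN_neq.
    pose proof (ra_lt n k' K j ltac:(lia) Hj). unfold ra in *; lia.
  - intros i' Hi'. destruct (Nat.eq_dec i' i) as [->|Hne].
    + rewrite updR_eq by reflexivity.
      destruct K as [|[|K0]]; try lia.
      change (path (updN nr (ra n (S (S K0)) i) a) n (S (S K0)) i) with
        (i :: path (updN nr (ra n (S (S K0)) i) a) n (S K0) (updN nr (ra n (S (S K0)) i) a (ra n (S (S K0)) i))).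
      rewrite updN_eq by reflexivity.
      replace (S (S K0) - 1)%nat with (S K0) in * by lia.
      assert (Ta := T (S K0) a ltac:(lia) ltac:(lia)).
      rewrite (path_frame_row nr).
      * eapply opt_ext with (g := fun j => rr (ra n (S K0) j)); [lia | exact Hia | exact Ta | exact Hb | |].
        2:{ intros j Hj Hjn. apply Hbest; lia. }
        intros j t Hj Ht. pose proof (feas_bound _ _ _ _ Ht).
        destruct (T (S K0) j ltac:(lia) ltac:(lia)) as (_ & _ & Ho). apply Ho; auto.
      * eapply opt_feas_all; eauto.
      * intros k' j Hk' Hj _. apply updN_neq.
        pose proof (ra_lt n k' (S (S K0)) j ltac:(lia) Hj). unfold ra in *; lia.
    + specialize (R i' ltac:(lia)).
      rewrite updR_neq by (unfold ra; lia).
      rewrite (path_frame_row nr); auto. eapply opt_feas_all; eauto.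
      intros k' j Hk' Hj Hjk. apply updN_neq.
      destruct (Nat.eq_dec k' K) as [->|Hk2].
      * specialize (Hjk eq_refl). subst j. unfold ra; lia.
      * pose proof (ra_lt n k' K j ltac:(lia) Hj). unfold ra in *; lia.
Qed.

Definition PD : program :=
 [ (*0*) NConst 8 1; NConst 2 2; NConst 3 16; NAdd 3 3 0; NAdd 3 3 0;
   (*5*) JNLt 1 2 40; NSub 4 3 0; NSub 7 0 2; NAdd 7 7 8; NAdd 12 7 8; NConst 5 0;
   (*11*) JNLt 5 7 13; Jmp 37;
   (*13*) NAdd 6 5 8; RDist 3 5 6; NAdd 9 4 6; RLoad 4 9; RAdd 1 3 4; NAdd 10 6 13; NAdd 6 6 8;
   (*20*) JNLt 6 12 22; Jmp 32;
   (*22*) RDist 3 5 6; NAdd 9 4 6; RLoad 4 9; RAdd 2 3 4; JRLt 1 2 28; Jmp 30;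
   (*28*) RAdd 1 2 5; NAdd 10 6 13;
   (*30*) NAdd 6 6 8; Jmp 20;
   (*32*) NAdd 9 3 5; RStore 9 1; NStore 9 10; NAdd 5 5 8; Jmp 11;
   (*37*) NAdd 2 2 8; NAdd 3 3 0; Jmp 5;
   (*40*) NSub 3 3 0; NConst 11 0; RLoad 0 3; NAdd 2 1 13;
   (*44*) Out 11; JNLt 8 2 47; Halt;
   (*47*) NAdd 9 3 11; NLoad 11 9; NSub 2 2 8; NSub 3 3 0; Jmp 44 ].

Lemma ra_add n k j : (ra n k 0 + j)%nat = ra n k j.
Proof. unfold ra; lia. Qed.

Lemma addr_ok n p k j : (k <= p)%nat -> (j < n)%nat -> (ra n k j < ra n (S p) 0)%nat.
Proof. intros. apply ra_lt; lia. Qed.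

Lemma combine E alpha P M (Q Rr : state -> Prop) s c b T : (c + b <= T)%nat ->
  (exists t1 s', steps E alpha P M t1 s s' /\ (t1 <= c)%nat /\ Q s') ->
  (forall s', Q s' -> exists t2 f, steps E alpha P M t2 s' f /\ (t2 <= b)%nat /\ Rr f) ->
  exists t f, steps E alpha P M t s f /\ (t <= T)%nat /\ Rr f.
Proof.
  intros HT (t1 & s' & H1 & H2 & H3) H. destruct (H s' H3) as (t2 & f & H4 & H5 & H6).
  exists (t1 + t2)%nat, f. split. eapply steps_trans; eauto. split; auto. lia.
Qed.

Ltac nsolve := first [ lia
  | (repeat match goal with |- context [ra ?n ?k ?j] => (let H := fresh "Hra" in assert (H := ra_ge n k j); revert H; generalize (ra n k j)) end); intros; unfold B in *; lia
  | unfold ra, B; lia | unfold ra, B; nia ].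
Ltac upd := repeat (match goal with
 | |- context [updN ?f ?r ?v ?x] => first [rewrite (updN_eq f r v x) by nsolve | rewrite (updN_neq f r v x) by nsolve]
 | |- context [updR ?f ?r ?v ?x] => first [rewrite (updR_eq f r v x) by nsolve | rewrite (updR_neq f r v x) by nsolve]
 | |- context [(ra ?n ?k 0 + ?j)%nat] => rewrite (ra_add n k j)
 end).
Ltac rwh := repeat match goal with H : ?f ?c = _ |- context [?f ?c] => is_var f; rewrite H end.
Ltac ur := repeat (progress (upd; rwh)).

Ltac solve_a := cbv beta; ur; first [unfold ra, B; lia | apply addr_ok; lia].
Ltac acc := cbn [accessed nreg]; repeat apply Forall_cons; try apply Forall_nil; solve_a.
Ltac step := eapply stS; [reflexivity | discriminate | acc | cbn [exec_instr pc nreg rreg out]].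
Ltac splits := repeat match goal with |- _ /\ _ => split end.
Ltac tabs := repeat first [apply Tab_updN; [unfold B; lia|] | apply Tab_updR; [unfold B; lia|]
  | apply RowP_updN; [unfold B; lia|] | apply RowP_updR; [unfold B; lia|]]; assumption.

Definition cm n p (s : state) := nreg s 0 = n /\ nreg s 1 = p /\ nreg s 8 = 1%nat /\
  nreg s 13 = 0%nat /\ rreg s 5 = 0 /\ out s = [].

Definition inv_in E alpha n p s K i j best a :=
  cm n p s /\ nreg s 2 = K /\ nreg s 3 = ra n K 0 /\ nreg s 4 = ra n (K-1) 0 /\
  nreg s 5 = i /\ nreg s 6 = j /\ nreg s 7 = (n - K + 1)%nat /\ nreg s 12 = (n - K + 2)%nat /\
  nreg s 10 = a /\ rreg s 1 = best /\
  (2 <= K <= p)%nat /\ (p <= n)%nat /\ (i + K <= n)%nat /\ (i < a < j)%nat /\ (j <= n - K + 2)%nat /\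
  best = dd E alpha i a + rreg s (ra n (K-1) a) /\
  (forall j', (i < j' < j)%nat -> dd E alpha i j' + rreg s (ra n (K-1) j') <= best) /\
  Tab E alpha n (nreg s) (rreg s) K /\ RowP E alpha n (nreg s) (rreg s) K i.

Lemma inner E alpha n p m : forall s K i j best a, (n - K + 2 - j)%nat = m -> pc s = 20%nat ->
  inv_in E alpha n p s K i j best a ->
  exists t f, steps E alpha PD (ra n (S p) 0) t s f /\ (t <= 10 * m + 2)%nat /\
    exists best' a', pc f = 32%nat /\ inv_in E alpha n p f K i (n - K + 2) best' a'.
Proof.
  induction m as [|m IH]; intros [pc0 nr rr o] K i j best a Hm Hpc Hinv; cbn in Hpc; subst pc0;
  destruct Hinv as ((H0 & H1 & H8 & H13 & H5r & Ho) & H2 & H3 & H4 & H5 & H6 & H7 & H12 & H10 & H1r &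
     HK & Hpn & HiK & Ha & Hj & Hbest & Hall & HT & HR); cbn [nreg rreg out] in *.
  - exists 2%nat. eexists. split.
    step. ur. destruct (Nat.ltb_spec j (n - K + 2)); [lia|].
    step. apply st0. split. lia. exists best, a. split. reflexivity.
    replace j with (n - K + 2)%nat in * by lia.
    unfold inv_in, cm; cbn [nreg rreg out]; splits; auto; lia.
  - assert (Hjl : (j < n - K + 2)%nat) by lia.
    assert (Hjn : (j < n)%nat) by lia.
    apply combine with (c := 10%nat) (b := (10 * m + 2)%nat)
      (Q := fun s' => pc s' = 20%nat /\ exists best' a', inv_in E alpha n p s' K i (S j) best' a'); [lia| |].
    2:{ intros s' (Hpc' & best' & a' & Hinv'). apply (IH s' K i (S j) best' a'); auto; lia. }
    destruct (Rlt_dec best (dd E alpha i j + rr (ra n (K-1) j))) as [Hlt|Hge].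
    + do 2 eexists. split.
      step. ur. destruct (Nat.ltb_spec j (n-K+2)); [|lia].
      step. step. step. step. step. ur. destruct (Rlt_dec _ _) as [_|Hn']; [|contradiction].
      step. step. step. step. apply st0.
      split. lia. split. reflexivity.
      exists (dd E alpha i j + rr (ra n (K-1) j) + 0), j.
      unfold inv_in, cm; cbn [nreg rreg out]; splits; ur; try tabs; try lia; try lra.
      intros j' Hj'. ur. destruct (Nat.eq_dec j' j) as [->|Hne]. lra.
      specialize (Hall j' ltac:(lia)). lra.
    + do 2 eexists. split.
      step. ur. destruct (Nat.ltb_spec j (n-K+2)); [|lia].
      step. step. step. step. step. ur. destruct (Rlt_dec _ _) as [Hn'|_]; [contradiction|].
      step. step. step. apply st0.
      split. lia. split. reflexivity.
      exists best, a.
      unfold inv_in, cm; cbn [nreg rreg out]; splits; ur; try tabs; try lia; try lra.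
      intros j' Hj'. ur. destruct (Nat.eq_dec j' j) as [->|Hne]. lra.
      specialize (Hall j' ltac:(lia)). lra.
Qed.

Definition inv_mid E alpha n p s K i :=
  cm n p s /\ nreg s 2 = K /\ nreg s 3 = ra n K 0 /\ nreg s 4 = ra n (K-1) 0 /\
  nreg s 5 = i /\ nreg s 7 = (n - K + 1)%nat /\ nreg s 12 = (n - K + 2)%nat /\
  (2 <= K <= p)%nat /\ (p <= n)%nat /\ (i <= n - K + 1)%nat /\
  Tab E alpha n (nreg s) (rreg s) K /\ RowP E alpha n (nreg s) (rreg s) K i.

Lemma mid E alpha n p m : forall s K i, (n - K + 1 - i)%nat = m -> pc s = 11%nat ->
  inv_mid E alpha n p s K i ->
  exists t f, steps E alpha PD (ra n (S p) 0) t s f /\ (t <= m * (15 + 10 * n) + 2)%nat /\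
    pc f = 37%nat /\ inv_mid E alpha n p f K (n - K + 1).
Proof.
  induction m as [|m IH]; intros [pc0 nr rr o] K i Hm Hpc Hinv; cbn in Hpc; subst pc0;
  destruct Hinv as ((H0 & H1 & H8 & H13 & H5r & Ho) & H2 & H3 & H4 & H5 & H7 & H12 &
     HK & Hpn & Hi & HT & HR); cbn [nreg rreg out] in *.
  - exists 2%nat. eexists. split.
    step. ur. destruct (Nat.ltb_spec i (n - K + 1)); [lia|].
    step. apply st0. split. lia. split. reflexivity.
    replace i with (n - K + 1)%nat in * by lia.
    unfold inv_mid, cm; cbn [nreg rreg out]; splits; auto; lia.
  - assert (Hil : (i < n - K + 1)%nat) by lia.
    apply combine with (c := 8%nat) (b := (10 * (n - K - i) + 2 + (5 + m * (15 + 10 * n)) + 2)%nat)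
      (Q := fun s' => pc s' = 20%nat /\ exists best a, inv_in E alpha n p s' K i (i + 2) best a); [nia| |].
    + do 2 eexists. split.
      step. ur. destruct (Nat.ltb_spec i (n-K+1)); [|lia].
      do 7 step. apply st0.
      split. lia. split. reflexivity.
      eexists (dd E alpha i (i + 1) + rr (ra n (K - 1) (i + 1))), (i + 1)%nat.
      unfold inv_in, cm; cbn [nreg rreg out]; splits; ur; try tabs; try lia; try lra.
      intros j' Hj'. replace j' with (i+1)%nat by lia. ur. lra.
    + intros s' (Hpc' & best & a & Hinv').
      apply combine with (c := (10 * (n - K - i) + 2)%nat) (b := (5 + m * (15 + 10 * n) + 2)%nat)
        (Q := fun s' => pc s' = 32%nat /\ exists best a, inv_in E alpha n p s' K i (n - K + 2) best a); [lia| |].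
      { destruct (inner E alpha n p (n - K + 2 - (i + 2)) s' K i (i + 2) best a eq_refl Hpc' Hinv')
          as (t & f & Hs & Ht & best' & a' & Hpf & Hf).
        exists t, f. split; auto. split. lia. split; eauto. }
      intros [pc1 nrf rrf of] (Hpc1 & best' & a' & Hf). cbn in Hpc1; subst pc1.
      destruct Hf as ((G0 & G1 & G8 & G13 & G5r & Go) & G2 & G3 & G4 & G5 & G6 & G7 & G12 & G10 & G1r &
        GK & Gpn & GiK & Ga & Gj & Gbest & Gall & GT & GR); cbn [nreg rreg out] in *.
      apply combine with (c := 5%nat) (b := (m * (15 + 10 * n) + 2)%nat)
        (Q := fun s' => pc s' = 11%nat /\ inv_mid E alpha n p s' K (S i)); [lia| |].
      { do 2 eexists. split.
        do 5 step. apply st0. split. lia. split. reflexivity.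
        destruct (store_ok E alpha n (updN nrf 9 (ra n K i)) rrf K i a' best') as [T' R'];
          try lia; [apply Tab_updN; [unfold B; lia|auto] | apply RowP_updN; [unfold B; lia|auto]
          | exact Gbest | intros j Hj1 Hj2; apply Gall; lia | ].
        unfold inv_mid, cm; cbn [nreg rreg out]; splits; ur; try lia; try tabs; auto. }
      intros s2 (Hpc2 & Hinv2). apply (IH s2 K (S i)); auto; lia.
Qed.

Lemma ra_pred n K : (1 <= K)%nat -> (ra n K 0 - n)%nat = ra n (K-1) 0.
Proof. intros. unfold ra, B. destruct K; [lia|]. replace (S K - 1)%nat with K by lia. rewrite Nat.mul_succ_l. lia. Qed.
Lemma ra_next n K : ra n K n = ra n (S K) 0.
Proof. unfold ra, B. rewrite Nat.mul_succ_l. lia. Qed.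

Definition inv_out E alpha n p s K :=
  cm n p s /\ nreg s 2 = K /\ nreg s 3 = ra n K 0 /\
  (2 <= K <= S p)%nat /\ (2 <= p <= n)%nat /\ Tab E alpha n (nreg s) (rreg s) K.

Lemma outer E alpha n p m : forall s K, (S p - K)%nat = m -> pc s = 5%nat ->
  inv_out E alpha n p s K ->
  exists t f, steps E alpha PD (ra n (S p) 0) t s f /\ (t <= m * (11 + n * (15 + 10 * n)) + 1)%nat /\
    pc f = 40%nat /\ inv_out E alpha n p f (S p).
Proof.
  induction m as [|m IH]; intros [pc0 nr rr o] K Hm Hpc Hinv; cbn in Hpc; subst pc0;
  destruct Hinv as ((H0 & H1 & H8 & H13 & H5r & Ho) & H2 & H3 & HK & Hpn & HT); cbn [nreg rreg out] in *.
  - exists 1%nat. eexists. split.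
    step. ur. destruct (Nat.ltb_spec p K); [|lia].
    apply st0. split. lia. split. reflexivity.
    replace K with (S p) in * by lia.
    unfold inv_out, cm; cbn [nreg rreg out]; splits; auto; lia.
  - apply combine with (c := 6%nat) (b := ((n - K + 1) * (15 + 10 * n) + 2 + (3 + m * (11 + n * (15 + 10 * n)) + 1))%nat)
      (Q := fun s' => pc s' = 11%nat /\ inv_mid E alpha n p s' K 0); [assert (n - K + 1 <= n)%nat by lia; nia| |].
    + do 2 eexists. split.
      step. ur. destruct (Nat.ltb_spec p K); [lia|].
      do 5 step. apply st0.
      split. lia. split. reflexivity.
      unfold inv_mid, cm; cbn [nreg rreg out]; splits; ur; try tabs; try lia; auto.
      apply ra_pred; lia. apply RowP_0.
    + intros s' (Hpc' & Hinv').
      apply combine with (c := ((n - K + 1) * (15 + 10 * n) + 2)%nat) (b := (3 + m * (11 + n * (15 + 10 * n)) + 1)%nat)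
        (Q := fun s' => pc s' = 37%nat /\ inv_mid E alpha n p s' K (n - K + 1)); [lia| |].
      { destruct (mid E alpha n p (n - K + 1 - 0) s' K 0 eq_refl Hpc' Hinv')
          as (t & f & Hs & Ht & Hpf & Hf).
        exists t, f. split; auto. split. lia. split; eauto. }
      intros [pc1 nrf rrf of] (Hpc1 & Hf). cbn in Hpc1; subst pc1.
      destruct Hf as ((G0 & G1 & G8 & G13 & G5r & Go) & G2 & G3 & G4 & G5 & G7 & G12 &
        GK & Gpn & Gi & GT & GR); cbn [nreg rreg out] in *.
      apply combine with (c := 3%nat) (b := (m * (11 + n * (15 + 10 * n)) + 1)%nat)
        (Q := fun s' => pc s' = 5%nat /\ inv_out E alpha n p s' (S K)); [lia| |].
      { do 2 eexists. split.
        do 3 step. apply st0. split. lia. split. reflexivity.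
        assert (TN : Tab E alpha n nrf rrf (S K)) by (apply (Tab_next _ _ _ _ _ _ (n - K + 1)); auto; lia).
        unfold inv_out, cm; cbn [nreg rreg out]; splits; ur; try lia; try tabs; auto.
        apply ra_next. }
      intros s2 (Hpc2 & Hinv2). apply (IH s2 (S K)); auto; lia.
Qed.

Definition inv_rec n p (nr0 : nat -> nat) (V : R) s k cur pre :=
  nreg s 0 = n /\ nreg s 8 = 1%nat /\ nreg s 13 = 0%nat /\ nreg s 2 = k /\ nreg s 3 = ra n k 0 /\
  nreg s 11 = cur /\ out s = pre /\ rreg s 0 = V /\ (1 <= k <= p)%nat /\
  (forall x, (B <= x)%nat -> nreg s x = nr0 x) /\
  pre ++ path nr0 n k cur = path nr0 n p 0 /\ Forall (fun a => (a < n)%nat) (path nr0 n k cur).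

Lemma recl E alpha n p nr0 V k : forall s cur pre, pc s = 44%nat ->
  inv_rec n p nr0 V s k cur pre ->
  exists t f, steps E alpha PD (ra n (S p) 0) t s f /\ (t <= 8 * k)%nat /\ halted PD f /\
    out f = path nr0 n p 0 /\ rreg f 0 = V.
Proof.
  induction k as [|k IH]; intros [pc0 nr rr o] cur pre Hpc Hinv; cbn in Hpc; subst pc0;
  destruct Hinv as (H0 & H8 & H13 & H2 & H3 & H11 & Ho & H0r & Hk & Hfr & Hpath & Hf); cbn [nreg rreg out] in *;
  subst o; [lia|].
  assert (Hcur : (cur < n)%nat) by (simpl in Hf; inversion Hf; auto).
  destruct k as [|k].
  - exists 2%nat. eexists. split.
    step. step. ur. destruct (Nat.ltb_spec 1 1); [lia|].
    apply st0. split. lia. split. right. reflexivity.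
    cbn [out rreg]; ur; split; [rewrite <- Hpath; reflexivity | auto].
  - apply combine with (c := 8%nat) (b := (8 * S k)%nat)
      (Q := fun s' => pc s' = 44%nat /\ inv_rec n p nr0 V s' (S k) (nr0 (ra n (S (S k)) cur)) (pre ++ [cur])); [lia| |].
    + do 2 eexists. split.
      step. step. ur. destruct (Nat.ltb_spec 1 (S (S k))); [|lia].
      step. step. ur. rewrite (Hfr (ra n (S (S k)) cur)) by apply ra_ge.
      do 3 step. apply st0. split. lia. split. reflexivity.
      unfold inv_rec; cbn [nreg rreg out]; splits; ur; try lia; auto.
      * rewrite ra_pred by lia. reflexivity.
      * intros x Hx. ur. apply Hfr; auto.
      * rewrite <- app_assoc, <- Hpath. reflexivity.
      * simpl in Hf. inversion Hf; auto.
    + intros s' (Hpc' & Hinv'). apply (IH s' _ _ Hpc' Hinv').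
Qed.

Lemma steps_mono E alpha P M M' k s f : (M <= M')%nat ->
  steps E alpha P M k s f -> steps E alpha P M' k s f.
Proof.
  intros HM. induction 1. constructor. econstructor; eauto.
  eapply Forall_impl; [|eauto]. intros; simpl in *; lia.
Qed.

Lemma dp_ok E alpha p : 0 < alpha -> pareto_sorted E -> (2 <= p <= length E)%nat ->
  solves_within E alpha PD p (40 * p * length E ^ 2) (40 * p * length E).
Proof.
  intros Hal HP Hp.
  remember (length E) as n eqn:Hn.
  assert (Hi : exists s, steps E alpha PD (ra n (S p) 0) 5 (init n p) s /\ pc s = 5%nat /\ inv_out E alpha n p s 2).
  { eexists. split. unfold init. do 5 step. apply st0. split. reflexivity.
    unfold inv_out, cm; cbn [nreg rreg out]; splits; ur; try reflexivity; try lia.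
    unfold ra, B; lia. apply Tab_2. intros; reflexivity. }
  destruct Hi as (s1 & Hs1 & Hpc1 & Hi1).
  destruct (outer E alpha n p (S p - 2) s1 2 eq_refl Hpc1 Hi1) as (t2 & [pc2 nrf rrf o2] & Hs2 & Ht2 & Hpc2 & Hi2).
  cbn in Hpc2; subst pc2.
  destruct Hi2 as ((G0 & G1 & G8 & G13 & G5r & Go) & G2 & G3 & GK & Gpn & GT); cbn [nreg rreg out] in *.
  assert (Hopt := GT p 0%nat ltac:(lia) ltac:(lia)).
  assert (Hr : exists s, steps E alpha PD (ra n (S p) 0) 4 (mkState 40 nrf rrf o2) s /\ pc s = 44%nat /\
     inv_rec n p nrf (rrf (ra n p 0)) s p 0 []).
  { eexists. split. do 4 step. apply st0. split. reflexivity.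
    assert (Hrp : (ra n (S p) 0 - n)%nat = ra n p 0) by (rewrite ra_pred by lia; f_equal; lia).
    unfold inv_rec; cbn [nreg rreg out]; splits; ur; rewrite ?Hrp; try reflexivity; try lia; auto.
    intros x Hx. ur. reflexivity.
    eapply opt_feas_all; eauto. }
  destruct Hr as (s3 & Hs3 & Hpc3 & Hi3).
  destruct (recl E alpha n p nrf (rrf (ra n p 0)) p s3 0 [] Hpc3 Hi3) as (t4 & f & Hs4 & Ht4 & Hh & Hout & Hr0).
  destruct (opt_final E alpha n p _ _ Hal HP Hn ltac:(lia) Hopt) as [Hsel Hobj].
  exists (5 + (t2 + (4 + t4)))%nat, f. split; [|split].
  - apply steps_exec; auto. apply steps_mono with (ra n (S p) 0).
    + unfold ra, B. nia.
    + rewrite <- Hn. eapply (steps_trans _ _ _ _ 5 _ _ s1); [exact Hs1|].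
      eapply (steps_trans _ _ _ _ t2 _ _ (mkState 40 nrf rrf o2)); [exact Hs2|].
      eapply (steps_trans _ _ _ _ 4 _ _ s3); [exact Hs3|exact Hs4].
  - rewrite ?Nat.pow_2_r. assert (S p - 2 <= p)%nat by lia.
    assert (t2 <= p * (11 + n * (15 + 10 * n)) + 1)%nat.
    { eapply Nat.le_trans; [exact Ht2|]. apply Nat.add_le_mono_r. apply Nat.mul_le_mono_r. lia. }
    assert (11 + n * (15 + 10 * n) <= 21 * (n * n))%nat by nia.
    assert (p * (11 + n * (15 + 10 * n)) <= p * (21 * (n * n)))%nat by (apply Nat.mul_le_mono_l; lia).
    assert (4 <= n * n)%nat by nia.
    assert (4 * p <= p * (n * n))%nat by nia.
    nia.
  - rewrite Hout. split; auto. rewrite Hr0, Hobj. reflexivity.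
Qed.

Lemma sw_mono E alpha P p T T' M : (T <= T')%nat ->
  solves_within E alpha P p T M -> solves_within E alpha P p T' M.
Proof. intros H (k & f & H1 & H2 & H3). exists k, f. split; [exact H1|split; [lia|exact H3]]. Qed.

Theorem theorem1 (alpha : R) (halpha : 0 < alpha) :
  (* polynomial time for every p *)
  (exists (P : program) (c d : nat),
     forall (E : list point) (p : nat),
       pareto_sorted E -> (2 <= p <= length E)%nat ->
       exists M, solves_within E alpha P p (c * length E ^ d + c) M) /\
  (* p = 2 : O(n) time, O(1) additional memory *)
  (exists (P : program) (c : nat),
     forall (E : list point),
       pareto_sorted E -> (2 <= length E)%nat ->
       solves_within E alpha P 2 (c * length E + c) c) /\
  (* p = 3 : O(n) time, O(1) additional memory *)
  (exists (P : program) (c : nat),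
     forall (E : list point),
       pareto_sorted E -> (3 <= length E)%nat ->
       solves_within E alpha P 3 (c * length E + c) c) /\
  (* p > 3 : O(p n^2) time, O(p n) memory *)
  (exists (P : program) (c : nat),
     forall (E : list point) (p : nat),
       pareto_sorted E -> (3 < p <= length E)%nat ->
       solves_within E alpha P p (c * p * length E ^ 2)
                                 (c * p * length E)).
Proof.
  split; [|split; [|split]].
  - exists PD, 40%nat, 3%nat. intros E p HP Hp. exists (40 * p * length E)%nat.
    eapply sw_mono; [|apply dp_ok; auto].
    assert (p * length E ^ 2 <= length E ^ 3)%nat.
    { change (length E ^ 3)%nat with (length E * length E ^ 2)%nat. apply Nat.mul_le_mono_r. lia. }
    nia.
  - exists P2, 6%nat. intros E HP Hn. apply p2_ok; auto.
  - exists P3, 20%nat. intros E HP Hn. apply p3_ok; auto.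
  - exists PD, 40%nat. intros E p HP Hp. apply dp_ok; auto. lia.
Qed.
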